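(* Let $E=(A\subset B)\in\mathcal S$ have Klein tableau $\Pi=[\gamma^0,\ldots,\gamma^e;\varphi^2,\ldots,\varphi^e]$ and let $\ell\le e$ be a natural number. Then the embedding $E|^\ell=(A/p^\ell A\subset B/p^\ell A)$ has Klein tableau $$\Pi(E|^\ell)=[\gamma^0,\ldots,\gamma^\ell;\varphi^2,\ldots,\varphi^\ell]=\Pi|^\ell.$$
   Context: Let $R$ be a commutative principal ideal domain, $p$ a generator of a maximal ideal, $k=R/(p)$. A $p$-module is a finite-length $R$-module annihilated by some power of $p$. For a $p$-module $B$, $\mathrm{type}(B)$ is the partition $\beta$ with conjugate $\beta'_i=\dim_kp^{i-1}B/p^iB$. $\mathcal S$ is the category of embeddings $(A\subset B)$ of submodules in $p$-modules. Partitions are drawn with the $i$-th column of length equal to the $i$-th part, rows numbered from the top. Klein tableau of $E=(A\subset B)$, $e$ the exponent of $A$: $\Pi(E)=[\gamma^0,\ldots,\gamma^e;\varphi^2,\ldots,\varphi^e]$ with $\gamma^i=\mathrm{type}(B/p^iA)$, and $\varphi^\ell$ the unique map from the boxes of the skew diagram $\gamma^\ell\setminus\gamma^{\ell-1}$ to positive integers, weakly increasing from left to right in each row, such that for $r\ge1$ the number of boxes in row $m$ with value $r$ equals $(\gamma^{\ell,r})'_m-(\gamma^{\ell,r-1})'_m$, where $\gamma^{\ell,r}=\mathrm{type}\big(B/(p^\ell A+p(p^{\ell-2}A\cap p^rB))\big)$. For $\ell\le e$, the restriction is $\Pi|^\ell=[\gamma^0,\ldots,\gamma^\ell;\varphi^2,\ldots,\varphi^\ell]$.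 *)

(* Defs.v *)
From HB Require Import structures.
From mathcomp Require Import all_boot all_order all_algebra.
Set Implicit Arguments. Unset Strict Implicit. Unset Printing Implicit Defensive.
Import GRing.Theory.
Local Open Scope ring_scope.

Definition is_ideal (R : comNzRingType) (I : R -> Prop) : Prop :=
  [/\ I 0, (forall x y, I x -> I y -> I (x + y)) & (forall r x, I x -> I (r * x))].

Definition gen_ideal (R : comNzRingType) (g : R) : R -> Prop :=
  fun x => exists r, x = r * g.

Definition same_set (T : Type) (U V : T -> Prop) : Prop := forall x, U x <-> V x.

Definition is_PID (R : idomainType) : Prop :=
  forall I : R -> Prop, is_ideal I -> exists g : R, same_set I (gen_ideal g).

Definition maximal_gen (R : idomainType) (p : R) : Prop :=
  p \isn't a GRing.unit /\
  forall I : R -> Prop, is_ideal I -> (forall x, gen_ideal p x -> I x) ->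
    same_set I (gen_ideal p) \/ I 1.

Section Modules.
Variables (R : idomainType) (p : R) (B : lmodType R).

Definition submod (U : B -> Prop) : Prop :=
  [/\ U 0, (forall x y, U x -> U y -> U (x + y)) & (forall r x, U x -> U (r *: x))].

Definition subset_ (U V : B -> Prop) := forall x, U x -> V x.
Definition sstrict (U V : B -> Prop) := subset_ U V /\ exists x, V x /\ ~ U x.

Definition schain (c : nat -> B -> Prop) (n : nat) : Prop :=
  (forall i, (i <= n)%N -> submod (c i)) /\ (forall i, (i < n)%N -> sstrict (c i) (c i.+1)).

Definition finite_length : Prop :=
  exists N : nat, forall c n, schain c n -> (n <= N)%N.

Definition p_module : Prop :=
  finite_length /\ exists n : nat, forall b : B, p ^+ n *: b = 0.

Definition sublen (U V : B -> Prop) (n : nat) : Prop :=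
  (exists c, schain c n /\ same_set (c 0%N) U /\ same_set (c n) V) /\
  ~ (exists c, schain c n.+1 /\ same_set (c 0%N) U /\ same_set (c n.+1) V).

Definition addS (U V : B -> Prop) : B -> Prop := fun x => exists u v, U u /\ V v /\ x = u + v.
Definition capS (U V : B -> Prop) : B -> Prop := fun x => U x /\ V x.
Definition pmulS (U : B -> Prop) : B -> Prop := fun x => exists y, U y /\ x = p *: y.
Definition pB (i : nat) : B -> Prop := fun x => exists b, x = p ^+ i *: b.
Definition pA (A : B -> Prop) (i : nat) : B -> Prop := fun x => exists a, A a /\ x = p ^+ i *: a.

(* (type (B/U))'_m = n, for m >= 1, i.e.
   n = dim_k p^(m-1)(B/U) / p^m(B/U) = length of (p^(m-1)B + U) / (p^m B + U)
   (a subquotient annihilated by p, whose k-dimension is its R-length). *)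
Definition cdim (U : B -> Prop) (m n : nat) : Prop :=
  sublen (addS (pB m) U) (addS (pB m.-1) U) n.

(* partitions: nonincreasing sequences of positive parts (parts = column lengths) *)
Definition is_partition (s : seq nat) : bool := sorted geq s && all (fun x => 0 < x)%N s.

Definition conjp (s : seq nat) (m : nat) : nat := count (fun x => m <= x)%N s.

Definition is_type (U : B -> Prop) (beta : seq nat) : Prop :=
  is_partition beta /\ forall m, (1 <= m)%N -> cdim U m (conjp beta m).

Definition exponent (A : B -> Prop) (e : nat) : Prop :=
  (forall a, A a -> p ^+ e *: a = 0) /\
  (forall e', (e' < e)%N -> exists a, A a /\ p ^+ e' *: a <> 0).

(* gamma^{l,r} = type (B / (p^l A + p (p^(l-2) A cap p^r B))) *)
Definition Ulr (A : B -> Prop) (l r : nat) : B -> Prop :=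
  addS (pA A l) (pmulS (capS (pA A (l - 2)) (pB r))).

(* A Klein tableau [gamma^0..gamma^e; phi^2..phi^e] is encoded as a pair
   (gam, phi): gam = [:: gamma^0; ...; gamma^e] (partitions as seq of parts),
   phi = [:: phi^2; ...; phi^e], where phi^l is the list of its rows
   (row m at index m-1, for m = 1 .. number of rows of gamma^l), each row being
   the list of the values of phi^l on the boxes of row m of the skew diagram
   gamma^l \ gamma^(l-1), read from left to right. *)
Definition tableau := (seq (seq nat) * seq (seq (seq nat)))%type.

Definition klein_tableau (A : B -> Prop) (T : tableau) : Prop :=
  let: (gam, phi) := T in
  exists e, exponent A e /\
  size gam = e.+1 /\
  (forall i, (i <= e)%N -> is_type (pA A i) (nth [::] gam i)) /\
  size phi = e.-1 /\
  (forall l, (2 <= l <= e)%N ->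
     let rows := nth [::] phi (l - 2) in
     let g := nth [::] gam l in
     let g' := nth [::] gam l.-1 in
     size rows = head 0%N g /\
     forall m, (1 <= m)%N ->
       let row := nth [::] rows m.-1 in
       [/\ size row = (conjp g m - conjp g' m)%N,
           sorted leq row,
           all (fun x => 0 < x)%N row &
           forall r, (1 <= r)%N ->
             exists a b, cdim (Ulr A l r) m a /\ cdim (Ulr A l r.-1) m b /\
                         (count_mem r row + b)%N = a]).

End Modules.

Definition restrict (l : nat) (T : tableau) : tableau :=
  (take l.+1 T.1, take l.-1 T.2).

(* Main.v *)
Require Import Defs.
From HB Require Import structures.
From mathcomp Require Import all_boot all_order all_algebra.
From mathcomp Require Import zify.
From Stdlib Require Import Classical.
Set Implicit Arguments. Unset Strict Implicit. Unset Printing Implicit Defensive.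
Import GRing.Theory.
Local Open Scope ring_scope.

Section Gen.
Variables (R : idomainType) (p : R) (T : lmodType R).

Lemma ss_refl (U : T -> Prop) : same_set U U. Proof. by []. Qed.
Lemma ss_sym (U V : T -> Prop) : same_set U V -> same_set V U.
Proof. by move=> h x; split=> /h. Qed.
Lemma ss_trans (U V W : T -> Prop) : same_set U V -> same_set V W -> same_set U W.
Proof. by move=> h1 h2 x; split=> [/h1/h2|/h2/h1]. Qed.

Lemma sublen_ext (U1 U2 V1 V2 : T -> Prop) n :
  same_set U1 U2 -> same_set V1 V2 -> sublen U1 V1 n -> sublen U2 V2 n.
Proof.
move=> hU hV [[c [hc [h0 hn]]] hno]; split.
  by exists c; split=> //; split; [exact: (ss_trans h0 hU)|exact: (ss_trans hn hV)].
move=> [c2 [hc2 [h02 hn2]]]; apply: hno; exists c2; split=> //; split.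
  exact: (ss_trans h02 (ss_sym hU)).
exact: (ss_trans hn2 (ss_sym hV)).
Qed.

Lemma sublen_ext_iff (U1 U2 V1 V2 : T -> Prop) n :
  same_set U1 U2 -> same_set V1 V2 -> (sublen U1 V1 n <-> sublen U2 V2 n).
Proof.
move=> hU hV; split; first exact: sublen_ext.
by apply: sublen_ext; apply: ss_sym.
Qed.

Lemma addS_ext (U1 U2 V1 V2 : T -> Prop) :
  same_set U1 U2 -> same_set V1 V2 -> same_set (addS U1 V1) (addS U2 V2).
Proof.
move=> hU hV x; split=> -[u [v [hu [hv ->]]]]; exists u, v.
  by split; [apply/hU|split; [apply/hV|]].
by split; [apply/hU|split; [apply/hV|]].
Qed.

Lemma pmulS_ext (U1 U2 : T -> Prop) :
  same_set U1 U2 -> same_set (pmulS p U1) (pmulS p U2).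
Proof. by move=> hU x; split=> -[y [hy ->]]; exists y; split=> //; apply/hU. Qed.

Lemma capS_ext (U1 U2 V1 V2 : T -> Prop) :
  same_set U1 U2 -> same_set V1 V2 -> same_set (capS U1 V1) (capS U2 V2).
Proof. by move=> hU hV x; split=> -[h1 h2]; split; [apply/hU|apply/hV|apply/hU|apply/hV]. Qed.

Lemma cdim_ext (U1 U2 : T -> Prop) m n :
  same_set U1 U2 -> (cdim p U1 m n <-> cdim p U2 m n).
Proof. by move=> h; apply: sublen_ext_iff; apply: addS_ext. Qed.

Lemma submod_sub (U : T -> Prop) x y : submod U -> U x -> U y -> U (x - y).
Proof.
move=> [h0 hD hZ] hx hy; rewrite -scaleN1r; apply: hD => //; exact: hZ.
Qed.

Lemma submod_addS (U V : T -> Prop) : submod U -> submod V -> submod (addS U V).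
Proof.
move=> [u0 uD uZ] [v0 vD vZ]; split.
- by exists 0, 0; rewrite addr0.
- move=> x y [a [b [ha [hb ->]]]] [c [d [hc [hd ->]]]].
  exists (a + c), (b + d); split; first exact: uD.
  by split; [exact: vD| rewrite addrACA].
- move=> r x [a [b [ha [hb ->]]]]; exists (r *: a), (r *: b).
  by split; [exact: uZ|split; [exact: vZ|rewrite scalerDr]].
Qed.

Lemma submod_pmulS (U : T -> Prop) : submod U -> submod (pmulS p U).
Proof.
move=> [u0 uD uZ]; split.
- by exists 0; rewrite scaler0.
- by move=> x y [a [ha ->]] [b [hb ->]]; exists (a + b); rewrite scalerDr; split=> //; exact: uD.
- move=> r x [a [ha ->]]; exists (r *: a); split; first exact: uZ.
  by rewrite !scalerA mulrC.
Qed.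

Lemma submod_capS (U V : T -> Prop) : submod U -> submod V -> submod (capS U V).
Proof.
move=> [u0 uD uZ] [v0 vD vZ]; split=> //.
- by move=> x y [? ?] [? ?]; split; [exact: uD|exact: vD].
- by move=> r x [? ?]; split; [exact: uZ|exact: vZ].
Qed.

Lemma submod_pB i : submod (pB p (B:=T) i).
Proof.
split.
- by exists 0; rewrite scaler0.
- by move=> x y [a ->] [b ->]; exists (a + b); rewrite scalerDr.
- by move=> r x [a ->]; exists (r *: a); rewrite !scalerA mulrC.
Qed.

Lemma submod_pA (A : T -> Prop) i : submod A -> submod (pA p A i).
Proof.
move=> [u0 uD uZ]; split.
- by exists 0; rewrite scaler0.
- by move=> x y [a [ha ->]] [b [hb ->]]; exists (a + b); rewrite scalerDr; split=> //; exact: uD.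
- move=> r x [a [ha ->]]; exists (r *: a); split; first exact: uZ.
  by rewrite !scalerA mulrC.
Qed.

Lemma pA_mono (A : T -> Prop) i j : submod A -> (i <= j)%N ->
  forall x, pA p A j x -> pA p A i x.
Proof.
move=> [u0 uD uZ] hij x [a [ha ->]]; exists (p ^+ (j - i) *: a); split; first exact: uZ.
by rewrite scalerA -exprD subnKC.
Qed.

Lemma submod_Ulr (A : T -> Prop) l r : submod A -> submod (Ulr p A l r).
Proof.
move=> hA; apply: submod_addS; first exact: submod_pA.
by apply: submod_pmulS; apply: submod_capS; [exact: submod_pA|exact: submod_pB].
Qed.

End Gen.

Section Transfer.
Variables (R : idomainType) (p : R) (B B' : lmodType R) (pi : {linear B -> B'}).
Hypothesis hsurj : forall y : B', exists x : B, pi x = y.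

Definition img (X : B -> Prop) : B' -> Prop := fun y => exists x, X x /\ y = pi x.
Definition preim (Y : B' -> Prop) : B -> Prop := fun x => Y (pi x).

Lemma chain_preim (c : nat -> B' -> Prop) n : schain c n -> schain (fun i => preim (c i)) n.
Proof.
move=> [hs hst]; split.
  move=> i /hs [h0 hD hZ]; split; rewrite /preim.
  - by rewrite linear0.
  - by move=> x y hx hy; rewrite linearD; exact: hD.
  - by move=> r x hx; rewrite linearZZ; exact: hZ.
move=> i /hst [hsub [y [hy hny]]]; split.
  by move=> x; apply: hsub.
by have [x hx] := hsurj y; exists x; rewrite /preim hx.
Qed.

Lemma chain_mono (c : nat -> B -> Prop) n : schain c n -> forall i, (i <= n)%N -> forall x, c 0%N x -> c i x.
Proof.
move=> [_ hst]; elim=> [//|i IH] hi x hx.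
by apply: (hst i hi).1; apply: IH => //; exact: ltnW.
Qed.

Lemma chain_img (c : nat -> B -> Prop) n : schain c n -> (forall x, pi x = 0 -> c 0%N x) ->
  schain (fun i => img (c i)) n.
Proof.
move=> hc hK; have [hs hst] := hc; split.
  move=> i /hs [h0 hD hZ]; split; rewrite /img.
  - by exists 0; rewrite linear0.
  - move=> _ _ [x [hx ->]] [y [hy ->]]; exists (x + y); rewrite linearD; split=> //.
    exact: hD.
  - by move=> r _ [x [hx ->]]; exists (r *: x); rewrite linearZZ; split=> //; exact: hZ.
move=> i hi; have [hsub [y [hy hny]]] := hst i hi; split.
  by move=> _ [x [hx ->]]; exists x; split=> //; exact: hsub.
exists (pi y); split; first by exists y.
move=> [z [hz he]]; apply: hny.
have hci : submod (c i) by apply: hs; exact: ltnW.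
have -> : y = (y - z) + z by rewrite subrK.
case: hci => _ hD _; apply: hD => //.
apply: (chain_mono hc (ltnW hi)); apply: hK; by rewrite linearB he subrr.
Qed.

Lemma ex_chain_iff (U V : B' -> Prop) k :
  (exists c, schain c k /\ same_set (c 0%N) U /\ same_set (c k) V) <->
  (exists c, schain c k /\ same_set (c 0%N) (preim U) /\ same_set (c k) (preim V)).
Proof.
split.
  move=> [c [hc [h0 hk]]]; exists (fun i => preim (c i)); split; first exact: chain_preim.
  by split=> x; rewrite /preim; [apply: h0|apply: hk].
move=> [c [hc [h0 hk]]]; exists (fun i => img (c i)).
have hK : forall x, pi x = 0 -> c 0%N x.
  move=> x hx; apply/h0; rewrite /preim hx.
  have [h00 _ _] := hc.1 0%N (leq0n _).
  by move/h0: h00; rewrite /preim linear0.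
split; first exact: chain_img.
split=> y; split.
- by move=> [x [hx ->]]; apply/h0.
- by move=> hy; have [x hx] := hsurj y; exists x; split=> //; apply/h0; rewrite /preim hx.
- by move=> [x [hx ->]]; apply/hk.
- by move=> hy; have [x hx] := hsurj y; exists x; split=> //; apply/hk; rewrite /preim hx.
Qed.

Lemma sublen_preim (U V : B' -> Prop) n :
  sublen U V n <-> sublen (preim U) (preim V) n.
Proof.
rewrite /sublen; split=> -[h1 h2]; split.
- by apply/ex_chain_iff.
- by move=> /ex_chain_iff.
- by apply/ex_chain_iff.
- by move=> /ex_chain_iff.
Qed.

Lemma preim_img U : submod U -> (forall x, pi x = 0 -> U x) -> same_set (preim (img U)) U.
Proof.
move=> hU hK x; split; last by move=> hx; exists x.
move=> [u [hu he]].
have -> : x = (x - u) + u by rewrite subrK.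
case: hU => _ hD _; apply: hD => //; apply: hK; by rewrite linearB he subrr.
Qed.

Lemma img_ext U V : same_set U V -> same_set (img U) (img V).
Proof. by move=> h y; split=> -[x [hx ->]]; exists x; split=> //; apply/h. Qed.

Lemma img_addS X Y : same_set (img (addS X Y)) (addS (img X) (img Y)).
Proof.
move=> y; split.
  move=> [_ [[u [v [hu [hv ->]]]] ->]]; exists (pi u), (pi v).
  by split; [exists u|split; [exists v|rewrite linearD]].
move=> [_ [_ [[u [hu ->]] [[v [hv ->]] ->]]]]; exists (u + v).
by split; [exists u, v| rewrite linearD].
Qed.

Lemma img_pmulS X : same_set (img (pmulS p X)) (pmulS p (img X)).
Proof.
move=> y; split.
  by move=> [_ [[u [hu ->]] ->]]; exists (pi u); split; [exists u|rewrite linearZZ].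
by move=> [_ [[u [hu ->]] ->]]; exists (p *: u); split; [exists u|rewrite linearZZ].
Qed.

Lemma img_capS X Y : submod X -> (forall x, pi x = 0 -> X x) ->
  same_set (img (capS X Y)) (capS (img X) (img Y)).
Proof.
move=> hX hK y; split.
  by move=> [x [[hx hy] ->]]; split; exists x.
move=> [[x1 [hx1 ->]] [x2 [hx2 he]]]; exists x2; split=> //; split=> //.
have -> : x2 = x1 - (x1 - x2) by rewrite opprB addrC subrK.
apply: submod_sub => //; apply: hK; by rewrite linearB he subrr.
Qed.

Lemma img_pB m : same_set (img (pB p m)) (pB p m).
Proof.
move=> y; split.
  by move=> [_ [[b ->] ->]]; exists (pi b); rewrite linearZZ.
move=> [b' ->]; have [b hb] := hsurj b'.
by exists (p ^+ m *: b); split; [exists b|rewrite linearZZ hb].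
Qed.

Lemma img_pA A i : same_set (img (pA p A i)) (pA p (img A) i).
Proof.
move=> y; split.
  by move=> [_ [[a [ha ->]] ->]]; exists (pi a); split; [exists a|rewrite linearZZ].
by move=> [_ [[a [ha ->]] ->]]; exists (p ^+ i *: a); split; [exists a|rewrite linearZZ].
Qed.

Lemma cdim_img U m n : submod U -> (forall x, pi x = 0 -> U x) ->
  (cdim p (img U) m n <-> cdim p U m n).
Proof.
move=> hU hK; rewrite /cdim.
have e1 : forall j, same_set (addS (pB p j) (img U)) (img (addS (pB p j) U)).
  move=> j; apply: ss_trans (ss_sym (img_addS _ _)).
  by apply: addS_ext; [apply: ss_sym; exact: img_pB|exact: ss_refl].
rewrite (sublen_ext_iff _ (e1 m) (e1 m.-1)) sublen_preim.
have e2 : forall j, same_set (preim (img (addS (pB p j) U))) (addS (pB p j) U).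
  move=> j; apply: preim_img; first by apply: submod_addS => //; exact: submod_pB.
  move=> x hx; exists 0, x; split; first by exists 0; rewrite scaler0.
  by split; [exact: hK|rewrite add0r].
exact: sublen_ext_iff.
Qed.

End Transfer.

Lemma exp_uniq (R : idomainType) (p : R) (B : lmodType R) (A : B -> Prop) e1 e2 :
  exponent p A e1 -> exponent p A e2 -> e1 = e2.
Proof.
move=> [h1 h1'] [h2 h2']; case: (ltngtP e1 e2) => // h.
- by have [a [ha hn]] := h2' _ h; case: hn; exact: h1.
- by have [a [ha hn]] := h1' _ h; case: hn; exact: h2.
Qed.

Theorem lemma9 (R : idomainType) (p : R) (hR : is_PID R) (hp : maximal_gen p)
    (B : lmodType R) (A : B -> Prop)
    (hB : p_module p B) (hA : submod A)
    (e : nat) (he : exponent p A e) (l : nat) (hl : (l <= e)%N)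
    (Pi : tableau) (hPi : klein_tableau p A Pi)
    (B' : lmodType R) (pi : {linear B -> B'})
    (hsurj : forall y : B', exists x : B, pi x = y)
    (hker : forall x : B, pi x = 0 <-> pA p A l x) :
  klein_tableau p (fun y : B' => exists a, A a /\ y = pi a) (restrict l Pi).
Proof.
move: hPi; case: Pi => gam phi /= [e0 [he0 [hsz [hty [hszphi hphi]]]]].
have ee := exp_uniq he0 he; subst e0.
have hK : forall x, pi x = 0 -> pA p A l x by move=> x /hker.
have hKi : forall i, (i <= l)%N -> forall x, pi x = 0 -> pA p A i x.
  by move=> i hi x /hK; apply: pA_mono.
have cdimA : forall i m n, (i <= l)%N ->
    (cdim p (pA p (img pi A) i) m n <-> cdim p (pA p A i) m n).
  move=> i m n hi; rewrite -(cdim_img p hsurj m n (submod_pA p i hA) (hKi i hi)).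
  by apply: cdim_ext; apply: ss_sym; apply: img_pA.
have cdimU : forall l' r m n, (2 <= l' <= l)%N ->
    (cdim p (Ulr p (img pi A) l' r) m n <-> cdim p (Ulr p A l' r) m n).
  move=> l' r m n /andP [h2 hl']; rewrite -(cdim_img p hsurj m n (submod_Ulr p l' r hA)).
    apply: cdim_ext; rewrite /Ulr; apply: ss_trans; last first.
      by apply: ss_sym; apply: img_addS.
    apply: addS_ext; first by apply: ss_sym; apply: img_pA.
    apply: ss_trans; last first.
      by apply: ss_sym; apply: img_pmulS.
    apply: pmulS_ext; apply: ss_trans; last first.
      apply: ss_sym; apply: img_capS; first exact: submod_pA.
      by apply: hKi; lia.
    apply: capS_ext; first by apply: ss_sym; apply: img_pA.
    by apply: ss_sym; apply: img_pB.
  move=> x /(hKi l' hl') hx; exists x, 0; split=> //; split; last by rewrite addr0.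
  exists 0; split; last by rewrite scaler0.
  by split; [case: (submod_pA p (l' - 2)%N hA)|case: (submod_pB p B r)].
exists l; split.
  split.
    move=> _ [a [ha ->]]; rewrite -linearZZ; apply/hker; by exists a.
  move=> e' he'; apply: NNPP => hn; rewrite /img in hn.
  have hall : forall a, A a -> pA p A l (p ^+ e' *: a).
    move=> a ha; apply/hker; rewrite linearZZ.
    case: (eqVneq (p ^+ e' *: pi a) 0) => [//|hne]; exfalso.
    by apply: hn; exists (pi a); split; [exists a|apply/eqP].
  have hind : forall k a, A a -> pA p A (l + k) (p ^+ e' *: a).
    elim=> [|k IH] a ha; first by rewrite addn0; apply: hall.
    have [a2 [ha2 eq2]] := hall a ha.
    have [a3 [ha3 eq3]] := IH a2 ha2.
    exists (p ^+ (l - e'.+1) *: a3); split; first by case: hA => _ _ hZ; apply: hZ.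
    rewrite eq2.
    have -> : p ^+ l = p ^+ (l - e') * p ^+ e' by rewrite -exprD subnK // ltnW.
    rewrite -scalerA eq3 !scalerA -!exprD; congr (p ^+ _ *: _); lia.
  have [a [ha hne]] := he.2 e' (leq_trans he' hl).
  have [a3 [ha3 eq3]] := hind e a ha; apply: hne.
  by rewrite eq3 exprD -scalerA he.1 // scaler0.
split; first by rewrite size_take hsz; case: ltnP => //; lia.
split.
  move=> i hi; rewrite nth_take ?ltnS //.
  have [hpart hc] := hty i (leq_trans hi hl); split=> // m hm.
  by apply/cdimA => //; apply: hc.
split; first by rewrite size_take hszphi; case: ltnP => //; lia.
move=> l' hl'; have /andP [h2 hl2] := hl'.
have hl'e : (2 <= l' <= e)%N by apply/andP; split=> //; exact: leq_trans hl2 hl.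
rewrite /= nth_take; last by lia.
rewrite nth_take; last by lia.
rewrite nth_take; last by lia.
have [hrows hm] := hphi l' hl'e; split=> // m hm1.
have [s1 s2 s3 s4] := hm m hm1; split=> // r hr.
have [a [b [ha [hb hab]]]] := s4 r hr.
exists a, b; split; first by apply/cdimU.
by split=> //; apply/cdimU.
Qed.
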